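(* For every $n\geq 2$, let $D_n^2$ be the random variable that chooses independently a pair of trees $T,T'\in\mathcal{T}_n$ and computes $d_{\varphi,2}(T,T')^2$. Under the uniform model its expected value is $$E_U(D_n^2)=\frac{1}{3}(4n^3+18n^2-10n)-\frac{n(n+3)}{2}\cdot\frac{(2n-2)!!}{(2n-3)!!}-\frac{n(n+7)}{4}\left(\frac{(2n-2)!!}{(2n-3)!!}\right)^2.$$
   Context: A phylogenetic tree with $n$ leaves is a fully resolved (binary) rooted tree, viewed as a directed graph with arcs pointing away from the root, whose leaves are bijectively labeled by $\{1,\dots,n\}$; $\mathcal{T}_n$ denotes the set of all such trees (up to label-preserving isomorphism); $|\mathcal{T}_n|=(2n-3)!!$. The depth $\delta_T(v)$ of a node is the number of arcs from the root to it. For leaves $i\neq j$, $\varphi_T(i,j)$ is the depth of the lowest common ancestor of $i$ and $j$, and $\varphi_T(i,i)=\delta_T(i)$. The euclidean cophenetic metric is $d_{\varphi,2}(T_1,T_2)=\sqrt{\sum_{1\le i\le j\le n}(\varphi_{T_1}(i,j)-\varphi_{T_2}(i,j))^2}$. The uniform model gives each $T\in\mathcal{T}_n$ probability $1/(2n-3)!!$, and the two trees are chosen independently. Here $(2m-1)!!=(2m-1)(2m-3)\cdots 3\cdot 1$ and $(2m)!!=(2m)(2m-2)\cdots 2$, with $0!!=1$. *)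

(* Defs.v *)
From mathcomp Require Import all_boot all_order all_algebra.
Set Implicit Arguments. Unset Strict Implicit. Unset Printing Implicit Defensive.
Import Order.TTheory GRing.Theory Num.Theory.

Inductive tree : Type := Leaf of nat | Node of tree & tree.

Fixpoint leaves (T : tree) : seq nat :=
  match T with Leaf a => [:: a] | Node l r => leaves l ++ leaves r end.

(* T is a (planar representative of a) phylogenetic tree on {1,..,n}:
   its leaves are bijectively labelled by 1..n. *)
Definition phylo (n : nat) (T : tree) : bool := perm_eq (leaves T) (iota 1 n).

Fixpoint iso (T1 T2 : tree) : bool :=
  match T1, T2 with
  | Leaf a, Leaf b => a == b
  | Node l r, Node l' r' => (iso l l' && iso r r') || (iso l r' && iso r l')
  | _, _ => false
  end.

(* s is a system of representatives of T_n (isomorphism classes) *)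
Definition representatives (n : nat) (s : seq tree) : Prop :=
  [/\ all (phylo n) s,
      (forall T, phylo n T -> has (iso T) s) &
      pairwise (fun a b => ~~ iso a b) s].

(* phi_T(i,j): depth of the lowest common ancestor of leaves i and j
   (for i = j this is the depth of leaf i). *)
Fixpoint phi (T : tree) (i j : nat) : nat :=
  match T with
  | Leaf _ => 0
  | Node l r =>
      if (i \in leaves l) && (j \in leaves l) then (phi l i j).+1
      else if (i \in leaves r) && (j \in leaves r) then (phi r i j).+1
      else 0
  end.

Definition coph_dist2 (n : nat) (T1 T2 : tree) : rat :=
  (\sum_(1 <= i < n.+1) \sum_(i <= j < n.+1)
     ((phi T1 i j)%:R - (phi T2 i j)%:R) ^+ 2)%R.

Fixpoint dfact (m : nat) : nat :=
  match m with
  | 0 => 1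
  | 1 => 1
  | (k.+2) as m' => m' * dfact k
  end.

Definition EU_D2 (n : nat) (s : seq tree) : rat :=
  ((size s)%:R ^+ 2)^-1 * \sum_(T1 <- s) \sum_(T2 <- s) coph_dist2 n T1 T2.

(* Main.v *)
Require Import Defs.
From HB Require Import structures.
From mathcomp Require Import all_boot all_order all_algebra.
From mathcomp Require Import zify ring lra.
Import Order.TTheory GRing.Theory Num.Theory.
Set Implicit Arguments. Unset Strict Implicit. Unset Printing Implicit Defensive.

Fixpoint tree_eqb (a b : tree) : bool :=
  match a, b with
  | Leaf x, Leaf y => x == y
  | Node l r, Node l' r' => tree_eqb l l' && tree_eqb r r'
  | _, _ => false
  end.

Lemma tree_eqP : Equality.axiom tree_eqb.
Proof.
elim=> [x|l IHl r IHr] [y|l' r'] /=; try by constructor.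
- by apply: (iffP eqP) => [->|[]].
- apply: (iffP andP) => [[/IHl -> /IHr ->]//|[<- <-]].
  by split; [apply/IHl|apply/IHr].
Qed.

HB.instance Definition _ := hasDecEq.Build tree tree_eqP.

Lemma iso_refl T : iso T T.
Proof. by elim: T => [a|l IHl r IHr] //=; rewrite IHl IHr. Qed.

Lemma iso_sym T1 T2 : iso T1 T2 -> iso T2 T1.
Proof.
elim: T1 T2 => [a|l IHl r IHr] [b|l' r'] //=; first by move/eqP->.
case/orP=> /andP[h1 h2]; apply/orP; [left|right]; apply/andP; split; auto.
Qed.

Lemma iso_trans T2 T1 T3 : iso T1 T2 -> iso T2 T3 -> iso T1 T3.
Proof.
elim: T1 T2 T3 => [a|l IHl r IHr] [b|l2 r2] [c|l3 r3] //=.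
  by move=> /eqP-> /eqP->.
case/orP=> /andP[h1 h2]; case/orP=> /andP[h3 h4]; apply/orP.
- by left; rewrite (IHl _ _ h1 h3) (IHr _ _ h2 h4).
- by right; rewrite (IHl _ _ h1 h3) (IHr _ _ h2 h4).
- by right; rewrite (IHl _ _ h1 h4) (IHr _ _ h2 h3).
- by left; rewrite (IHl _ _ h1 h4) (IHr _ _ h2 h3).
Qed.

Lemma iso_leaves T1 T2 : iso T1 T2 -> perm_eq (leaves T1) (leaves T2).
Proof.
elim: T1 T2 => [a|l IHl r IHr] [b|l2 r2] //=; first by move/eqP->.
case/orP=> /andP[h1 h2].
  by apply: perm_cat; auto.
by rewrite perm_catC; apply: perm_cat; auto.
Qed.

Lemma iso_mem T1 T2 x : iso T1 T2 -> (x \in leaves T1) = (x \in leaves T2).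
Proof. by move/iso_leaves/perm_mem. Qed.

Lemma iso_phi T1 T2 i j : uniq (leaves T1) -> iso T1 T2 -> phi T1 i j = phi T2 i j.
Proof.
elim: T1 T2 => [a|l IHl r IHr] [b|l2 r2] //=.
rewrite cat_uniq => /and3P[ul dis ur].
case/orP=> /andP[h1 h2].
  by rewrite -(iso_mem _ h1) -(iso_mem _ h1) -(iso_mem _ h2) -(iso_mem _ h2) (IHl _ ul h1) (IHr _ ur h2).
rewrite -(iso_mem _ h1) -(iso_mem _ h1) -(iso_mem _ h2) -(iso_mem _ h2) (IHl _ ul h1) (IHr _ ur h2).
have [il|il] := boolP (i \in leaves l); have [jl|jl] := boolP (j \in leaves l) => //=.
have ir : i \notin leaves r by apply/negP => ir; move/hasPn: dis => /(_ i ir); rewrite il.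
by rewrite (negbTE ir).
Qed.

Lemma leaves_nil T : leaves T != [::].
Proof. by elim: T => [a|l IHl r IHr] //=; case: (leaves l) IHl. Qed.

Lemma iso_leafm m X : iso (Leaf m) X -> X = Leaf m.
Proof. by case: X => [b|? ?] //= /eqP->. Qed.
Fixpoint ins (T : tree) (m : nat) : seq tree :=
  match T with
  | Leaf a => [:: Node (Leaf a) (Leaf m)]
  | Node l r => Node (Node l r) (Leaf m) ::
      ([seq Node l' r | l' <- ins l m] ++ [seq Node l r' | r' <- ins r m])
  end.

Definition isleaf m (t : tree) := if t is Leaf a then a == m else false.
Definition isnode (t : tree) := if t is Node _ _ then true else false.

Fixpoint del (T : tree) (m : nat) : tree :=
  match T with
  | Leaf a => Leaf a
  | Node l r => if isleaf m l then r else if isleaf m r then l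
                else if m \in leaves l then Node (del l m) r else Node l (del r m)
  end.

Lemma ins_node T m T' : T' \in ins T m -> isnode T'.
Proof.
case: T => [a|l r] /=; first by rewrite inE => /eqP->.
rewrite inE mem_cat => /orP[/eqP->//|/orP[]] /mapP[x _ ->] //.
Qed.

Lemma ins_leaves T m T' : T' \in ins T m -> perm_eq (leaves T') (m :: leaves T).
Proof.
elim: T T' => [a|l IHl r IHr] T' /=.
  by rewrite inE => /eqP-> /=; rewrite perm_sym (perm_catC [:: m]).
rewrite inE mem_cat => /orP[/eqP-> /=|/orP[]] /=.
- by rewrite perm_sym -cat1s perm_catC.
- case/mapP=> x xin -> /=; rewrite -cat_cons; apply: perm_cat => //; exact: IHl.
- case/mapP=> x xin -> /=.
  apply: (perm_trans (perm_cat (perm_refl _) (IHr x xin))).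
  by rewrite -[m :: leaves r]cat1s -[m :: (leaves l ++ leaves r)]cat1s perm_catCA.
Qed.

Lemma ins_size T m : (size (ins T m)).+1 = 2 * size (leaves T).
Proof.
elim: T => [a|l IHl r IHr] //=.
rewrite size_cat !size_map size_cat.
have := leaves_nil l; have := leaves_nil r.
case: (leaves l) IHl => // ? ?; case: (leaves r) IHr => //= ? ? ? ? _ _. lia.
Qed.

Lemma isleaf_mem m X : isleaf m X -> m \in leaves X.
Proof. by case: X => [a|? ?] //= /eqP->; rewrite inE. Qed.

Lemma iso_isleaf m X Y : iso X Y -> isleaf m X = isleaf m Y.
Proof. by case: X => [a|? ?]; case: Y => [b|? ?] //= /eqP->. Qed.

Lemma del_leaves T m : m \in leaves T -> ~~ isleaf m T ->
  perm_eq (m :: leaves (del T m)) (leaves T).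
Proof.
elim: T => [a|l IHl r IHr] /=; first by rewrite inE => /eqP->; rewrite eqxx.
move=> mT _.
have [hl|hl] := boolP (isleaf m l).
  by case: l hl {IHl mT} => // a /= /eqP->.
have [hr|hr] := boolP (isleaf m r).
  case: r hr {IHr mT} => // a /= /eqP->.
  by rewrite -[m :: leaves l]cat1s perm_catC.
have [ml|ml] := boolP (m \in leaves l) => /=.
  by rewrite -cat_cons; apply: perm_cat => //; exact: IHl.
have mr : m \in leaves r by move: mT; rewrite mem_cat (negbTE ml).
apply: (perm_trans _ (perm_cat (perm_refl _) (IHr mr hr))).
by rewrite -[m :: leaves (del r m)]cat1s -[m :: (leaves l ++ _)]cat1s perm_catCA.
Qed.

Lemma del_ins R m T : m \notin leaves R -> T \in ins R m -> del T m = R.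
Proof.
elim: R T => [a|l IHl r IHr] T /=.
  by rewrite !inE => am /eqP-> /=; rewrite eq_sym (negbTE am) eqxx.
rewrite mem_cat negb_or => /andP[ml mr].
rewrite inE mem_cat => /orP[/eqP-> /=|/orP[]]; first by rewrite eqxx.
all: case/mapP=> x xin -> /=.
- have := ins_node xin; case: x xin => // l0 r0 xin _ /=.
  have -> : isleaf m r = false by apply/negP => /isleaf_mem; rewrite (negbTE mr).
  have -> : m \in leaves (Node l0 r0).
    by rewrite (perm_mem (ins_leaves xin)) inE eqxx.
  by move: (IHl _ ml xin) => /= ->.
- have := ins_node xin; case: x xin => // l0 r0 xin _ /=.
  have -> : isleaf m l = false by apply/negP => /isleaf_mem; rewrite (negbTE ml).
  by rewrite (negbTE ml); move: (IHr _ mr xin) => /= ->.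
Qed.

Lemma del_iso T1 T2 m : uniq (leaves T1) -> m \in leaves T1 -> ~~ isleaf m T1 ->
  iso T1 T2 -> iso (del T1 m) (del T2 m).
Proof.
elim: T1 T2 => [a|l IHl r IHr] [b|l2 r2] //=.
rewrite cat_uniq mem_cat => /and3P[ul dis ur] mlr _.
have nboth : ~~ ((m \in leaves l) && (m \in leaves r)).
  by apply/negP => /andP[a b]; move/hasPn: dis => /(_ m b); rewrite a.
case/orP=> /andP[h1 h2].
- rewrite -(iso_isleaf m h1) -(iso_isleaf m h2) -(iso_mem m h1).
  case: ifP => // hl; case: ifP => // hr; case: ifP => ml /=.
    by rewrite IHl ?hl // h2.
  have mr : m \in leaves r by move: mlr; rewrite ml.
  by rewrite IHr ?hr // h1.
- rewrite -(iso_isleaf m h1) -(iso_isleaf m h2) -(iso_mem m h2).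
  have [hl|hl] := boolP (isleaf m l).
    have ml := isleaf_mem hl.
    have -> : isleaf m r = false.
      by apply/negP => /isleaf_mem mr; move: nboth; rewrite ml mr.
    by [].
  have [hr|hr] := boolP (isleaf m r) => /=.
    by [].
  have [ml|ml] := boolP (m \in leaves l) => /=.
    have -> : m \in leaves r = false by apply/negP => mr; move: nboth; rewrite ml mr.
    by rewrite IHl // h2 orbT.
  have mr : m \in leaves r by move: mlr; rewrite (negbTE ml).
  by rewrite mr /= IHr // h1 orbT.
Qed.

Lemma ins_iso T m R : m \in leaves T -> ~~ isleaf m T -> iso (del T m) R ->
  exists2 T', T' \in ins R m & iso T T'.
Proof.
elim: T R => [a|l IHl r IHr] R /=; first by rewrite inE => /eqP->; rewrite eqxx.
rewrite mem_cat => mlr _.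
have headin : Node R (Leaf m) \in ins R m by case: R => * /=; rewrite inE eqxx.
have [hl|hl] := boolP (isleaf m l).
  move=> h; exists (Node R (Leaf m)) => //=.
  by case: l hl {IHl mlr} => // a /= /eqP->; rewrite eqxx h orbT.
have [hr|hr] := boolP (isleaf m r).
  move=> h; exists (Node R (Leaf m)) => //=.
  by case: r hr {IHr mlr} => // a /= /eqP->; rewrite eqxx h.
have [ml|ml] := boolP (m \in leaves l).
  case: R {headin} => // R1 R2 /= /orP[]/andP[h1 h2].
  - have [l' l'in il'] := IHl _ ml hl h1.
    exists (Node l' R2); last by rewrite /= il' h2.
    by rewrite inE mem_cat; apply/orP; right; apply/orP; left; apply/mapP; exists l'.
  - have [l' l'in il'] := IHl _ ml hl h1.
    exists (Node R1 l'); last by rewrite /= il' h2 orbT.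
    by rewrite inE mem_cat; apply/orP; right; apply/orP; right; apply/mapP; exists l'.
have mr : m \in leaves r by move: mlr; rewrite (negbTE ml).
case: R {headin} => // R1 R2 /= /orP[]/andP[h1 h2].
- have [r' r'in ir'] := IHr _ mr hr h2.
  exists (Node R1 r'); last by rewrite /= ir' h1.
  by rewrite inE mem_cat; apply/orP; right; apply/orP; right; apply/mapP; exists r'.
- have [r' r'in ir'] := IHr _ mr hr h2.
  exists (Node r' R2); last by rewrite /= ir' h1 orbT.
  by rewrite inE mem_cat; apply/orP; right; apply/orP; left; apply/mapP; exists r'.
Qed.

Definition niso (x y : tree) := ~~ iso x y.

Lemma iso_node a b c d : iso (Node a b) (Node c d) = (iso a c && iso b d) || (iso a d && iso b c).
Proof. by []. Qed.

Lemma ins_pairwise R m : uniq (m :: leaves R) -> pairwise niso (ins R m).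
Proof.
elim: R => [a|l IHl r IHr] //=.
rewrite cat_uniq mem_cat negb_or => /andP[/andP[ml mr] /and3P[ul dis ur]].
have mins x t : x \in ins t m -> m \in leaves x.
  by move/ins_leaves/perm_mem => ->; rewrite inE eqxx.
have notleafm x t : x \in ins t m -> iso (Leaf m) x = false.
  by move/ins_node; case: x.
rewrite pairwise_cat; apply/and4P; split.
- apply/allP=> x; rewrite mem_cat => /orP[] /mapP[y yin ->]; rewrite /niso iso_node.
  + rewrite (notleafm _ _ yin) andbF orbF; apply/negP => /andP[_ /iso_leafm rm].
    by move: mr; rewrite rm inE eqxx.
  + rewrite (notleafm _ _ yin) andbF /=; apply/negP => /andP[_ /iso_leafm lm].
    by move: ml; rewrite lm inE eqxx.
- apply/allrelP => x y /mapP[x' x'in ->] /mapP[y' y'in ->]; rewrite /niso iso_node.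
  apply/negP => /orP[]/andP[h1 h2].
  + by move: (mins _ _ x'in); rewrite (iso_mem _ h1) (negbTE ml).
  + have := leaves_nil r; case E: (leaves r) => [|z zs] // _.
    have zr : z \in leaves r by rewrite E inE eqxx.
    move/hasPn: dis => /(_ z zr); rewrite -(iso_mem _ h2) zr.
    by [].
- rewrite pairwise_map; apply: (sub_in_pairwise (P := mem (ins l m))) (IHl _) => //.
  + move=> x y xin yin; rewrite /niso /relpre => hxy; change (~~ iso (Node x r) (Node y r)); rewrite iso_node; apply/negP => /orP[]/andP[h1 h2].
    * by move: hxy; rewrite h1.
    * by move: (mins _ _ xin); rewrite (iso_mem _ h1) (negbTE mr).
  + by rewrite /= ml.
- rewrite pairwise_map; apply: (sub_in_pairwise (P := mem (ins r m))) (IHr _) => //.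
  + move=> x y xin yin; rewrite /niso /relpre => hxy; change (~~ iso (Node l x) (Node l y)); rewrite iso_node; apply/negP => /orP[]/andP[h1 h2].
    * by move: hxy; rewrite h2.
    * by move: (mins _ _ yin); rewrite -(iso_mem _ h1) (negbTE ml).
  + by rewrite /= mr.
Qed.

Fixpoint repsR (a : nat) (rl : seq nat) : seq tree :=
  match rl with
  | [::] => [:: Leaf a]
  | m :: rl' => flatten [seq ins T m | T <- repsR a rl']
  end.

Lemma perm_swap2 (x y : nat) s : perm_eq (x :: y :: s) (y :: x :: s).
Proof. by rewrite -[x :: y :: s]cat1s -[y :: s]cat1s -[y :: x :: s]cat1s perm_catCA. Qed.

Lemma repsR_leaves a rl T : T \in repsR a rl -> perm_eq (leaves T) (a :: rl).
Proof.
elim: rl T => [|m rl IH] T /=; first by rewrite inE => /eqP->.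
case/flatten_mapP=> R Rin Tin.
apply: (perm_trans (ins_leaves Tin)).
by apply: (perm_trans _ (perm_swap2 _ _ _)); rewrite perm_cons; exact: IH.
Qed.

Lemma size_leaves_node l r : 2 <= size (leaves (Node l r)).
Proof.
rewrite /= size_cat; have := leaves_nil l; have := leaves_nil r.
by case: (leaves l) => // ? ?; case: (leaves r) => //= *; lia.
Qed.

Lemma repsR_cover a rl T : perm_eq (leaves T) (a :: rl) ->
  exists2 T', T' \in repsR a rl & iso T T'.
Proof.
elim: rl T => [|m rl IH] T /=.
  case: T => [b|l r] hp.
    exists (Leaf a); first by rewrite inE.
    by move/perm_mem: hp => /(_ b); rewrite !inE eqxx /= => /esym.
  by have := size_leaves_node l r; rewrite (perm_size hp).
move=> hp.
have mT : m \in leaves T by rewrite (perm_mem hp) !inE eqxx orbT.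
have nl : ~~ isleaf m T.
  case: T hp {mT} => // b hp; have := perm_size hp; by [].
have hd : perm_eq (leaves (del T m)) (a :: rl).
  rewrite -(perm_cons m); apply: (perm_trans (del_leaves mT nl)).
  by apply: (perm_trans hp); apply: perm_swap2.
have [R Rin iR] := IH _ hd.
have [T' T'in iT'] := ins_iso mT nl iR.
by exists T' => //; apply/flatten_mapP; exists R.
Qed.

Lemma repsR_pairwise a rl : uniq (a :: rl) -> pairwise niso (repsR a rl).
Proof.
elim: rl => [|m rl IH] //= /andP[]; rewrite inE negb_or => /andP[am mrl] /andP[arl urs].
have u : uniq (a :: rl) by rewrite /= mrl urs.
have {}IH := IH u.
have hl : forall R, R \in repsR a rl -> perm_eq (leaves R) (a :: rl) by move=> R; apply: repsR_leaves.
have mnot : m \notin a :: rl by rewrite inE negb_or eq_sym am arl.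
elim: (repsR a rl) IH hl => [|R s IHs] //= /andP[allR ps] hl.
rewrite pairwise_cat; apply/and3P; split.
- apply/allrelP => x y xin /flatten_mapP[R' R'in yin].
  have hR := hl R (mem_head _ _).
  have uR : uniq (m :: leaves R) by rewrite /= (perm_mem hR) mnot (perm_uniq hR) u.
  have mR : m \notin leaves R by move: uR => /= /andP[].
  have hR' := hl R' (@mem_behead _ (R :: s) _ R'in).
  have mR' : m \notin leaves R' by rewrite (perm_mem hR').
  apply/negP => ixy.
  have ux : uniq (leaves x) by rewrite (perm_uniq (ins_leaves xin)).
  have mx : m \in leaves x by rewrite (perm_mem (ins_leaves xin)) inE eqxx.
  have nlx : ~~ isleaf m x by move: (ins_node xin); case: x {xin ux mx ixy}.
  have := del_iso ux mx nlx ixy.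
  rewrite (del_ins mR xin) (del_ins mR' yin) => iRR.
  by move/allP: allR => /(_ R' R'in); rewrite /niso iRR.
- apply: ins_pairwise.
  have hR := hl R (mem_head _ _).
  by rewrite /= (perm_mem hR) mnot (perm_uniq hR) u.
- apply: IHs => // R' R'in; apply: hl; exact: (@mem_behead _ (R :: s)).
Qed.

Lemma sumn_const (A : Type) (s : seq A) c : \sum_(x <- s) c = size s * c.
Proof. by elim: s => [|x s IH]; rewrite ?big_nil ?big_cons //= IH mulSn. Qed.

Lemma dfact_odd k : dfact (2 * k.+1 - 1) = (2 * k.+1 - 1) * dfact (2 * k.+1 - 3).
Proof.
case: k => [//|k].
have -> : 2 * k.+2 - 1 = (2 * k.+2 - 3).+2 by lia.
by [].
Qed.

Lemma repsR_size a rl : size (repsR a rl) = dfact (2 * (size rl).+1 - 3).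
Proof.
elim: rl => [|m rl IH] //=.
have -> : size (flatten [seq ins T m | T <- repsR a rl]) = size (repsR a rl) * (2 * (size rl).+1 - 1).
  have : forall R, R \in repsR a rl -> size (ins R m) = 2 * (size rl).+1 - 1.
    move=> R /repsR_leaves/perm_size hs; have := ins_size R m; rewrite hs /=; lia.
  elim: (repsR a rl) => [|R s IHs] //= h.
  rewrite size_cat IHs ?h ?mem_head // => R' R'in; apply: h; by rewrite inE R'in orbT.
rewrite IH.
have -> : 2 * (size rl).+2 - 3 = 2 * (size rl).+1 - 1 by lia.
by rewrite dfact_odd mulnC.
Qed.

Lemma sumS (A : Type) (s : seq A) f : \sum_(x <- s) (f x).+1 = \sum_(x <- s) f x + size s.
Proof. elim: s => [|x s IH]; first by rewrite !big_nil. rewrite !big_cons IH /=. lia. Qed.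

Lemma sumS2 (A : Type) (s : seq A) f :
  \sum_(x <- s) (f x).+1 ^ 2 = \sum_(x <- s) (f x) ^ 2 + 2 * \sum_(x <- s) f x + size s.
Proof.
elim: s => [|x s IH]; first by rewrite !big_nil. rewrite !big_cons IH /=.
ring.
Qed.

Lemma eq_sum_in (s : seq tree) (F G : tree -> nat) :
  (forall x, x \in s -> F x = G x) -> \sum_(x <- s) F x = \sum_(x <- s) G x.
Proof. exact: eq_big_seq. Qed.

Lemma mem_ins_leaves l m l' x : l' \in ins l m -> x != m -> (x \in leaves l') = (x \in leaves l).
Proof. by move/ins_leaves/perm_mem => -> xm; rewrite inE (negbTE xm). Qed.

Lemma ins_phi R m i j : i \in leaves R -> j \in leaves R -> i != m -> j != m ->
  \sum_(T <- ins R m) phi T i j = (size (ins R m)).+1 * phi R i j + 1 /\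
  \sum_(T <- ins R m) (phi T i j) ^ 2 =
     (size (ins R m)).+2 * (phi R i j) ^ 2 + 3 * phi R i j + 1.
Proof.
elim: R => [a|l IHl r IHr].
  rewrite !inE => /eqP-> /eqP-> _ _ /=.
  by rewrite !big_cons !big_nil /= !inE eqxx.
move=> iR jR im jm.
have iR' := iR; have jR' := jR.
move: iR' jR'; rewrite /= !mem_cat => ilr jlr.
have hh : phi (Node (Node l r) (Leaf m)) i j = (phi (Node l r) i j).+1.
  by rewrite [LHS]/= mem_cat ilr mem_cat jlr.
have hL : forall l', l' \in ins l m -> phi (Node l' r) i j =
    if (i \in leaves l) && (j \in leaves l) then (phi l' i j).+1
    else if (i \in leaves r) && (j \in leaves r) then (phi r i j).+1 else 0.
  by move=> l' l'in; rewrite [LHS]/= (mem_ins_leaves l'in im) (mem_ins_leaves l'in jm).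
have hR : forall r', r' \in ins r m -> phi (Node l r') i j =
    if (i \in leaves l) && (j \in leaves l) then (phi l i j).+1
    else if (i \in leaves r) && (j \in leaves r) then (phi r' i j).+1 else 0.
  by move=> r' r'in; rewrite [LHS]/= (mem_ins_leaves r'in im) (mem_ins_leaves r'in jm).
have hP : phi (Node l r) i j =
    if (i \in leaves l) && (j \in leaves l) then (phi l i j).+1
    else if (i \in leaves r) && (j \in leaves r) then (phi r i j).+1 else 0 by [].
rewrite [ins _ _]/= !big_cons !big_cat !big_map hh size_cat !size_map hP.
case: ifP => hl.
  case/andP: hl => il jl.
  have [IH1 IH2] := IHl il jl im jm.
  have hL' : forall x, x \in ins l m -> phi (Node x r) i j = (phi x i j).+1.
    by move=> x xin; rewrite hL // il jl.
  have hR' : forall x, x \in ins r m -> phi (Node l x) i j = (phi l i j).+1.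
    by move=> x xin; rewrite hR // il jl.
  rewrite (@eq_sum_in _ (fun x => phi (Node x r) i j) (fun x => (phi x i j).+1) hL').
  rewrite (@eq_sum_in _ (fun x => phi (Node l x) i j) (fun x => (phi l i j).+1) hR').
  rewrite (@eq_sum_in _ (fun x => phi (Node x r) i j ^ 2) (fun x => (phi x i j).+1 ^ 2)); last by move=> x xin; rewrite hL'.
  rewrite (@eq_sum_in _ (fun x => phi (Node l x) i j ^ 2) (fun x => (phi l i j).+1 ^ 2)); last by move=> x xin; rewrite hR'.
  rewrite !sumn_const sumS sumS2 IH1 IH2 /=; split; ring.
case: ifP => hr.
  case/andP: hr => ir jr.
  have [IH1 IH2] := IHr ir jr im jm.
  have hL' : forall x, x \in ins l m -> phi (Node x r) i j = (phi r i j).+1.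
    by move=> x xin; rewrite hL // hl ir jr.
  have hR' : forall x, x \in ins r m -> phi (Node l x) i j = (phi x i j).+1.
    by move=> x xin; rewrite hR // hl ir jr.
  rewrite (@eq_sum_in _ (fun x => phi (Node x r) i j) (fun x => (phi r i j).+1) hL').
  rewrite (@eq_sum_in _ (fun x => phi (Node l x) i j) (fun x => (phi x i j).+1) hR').
  rewrite (@eq_sum_in _ (fun x => phi (Node x r) i j ^ 2) (fun x => (phi r i j).+1 ^ 2)); last by move=> x xin; rewrite hL'.
  rewrite (@eq_sum_in _ (fun x => phi (Node l x) i j ^ 2) (fun x => (phi x i j).+1 ^ 2)); last by move=> x xin; rewrite hR'.
  rewrite !sumn_const sumS sumS2 IH1 IH2 /=; split; ring.
have hL' : forall x, x \in ins l m -> phi (Node x r) i j = 0.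
  by move=> x xin; rewrite hL // hl hr.
have hR' : forall x, x \in ins r m -> phi (Node l x) i j = 0.
  by move=> x xin; rewrite hR // hl hr.
rewrite (@eq_sum_in _ (fun x => phi (Node x r) i j) (fun x => 0) hL').
rewrite (@eq_sum_in _ (fun x => phi (Node l x) i j) (fun x => 0) hR').
rewrite (@eq_sum_in _ (fun x => phi (Node x r) i j ^ 2) (fun x => 0)); last by move=> x xin; rewrite hL'.
rewrite (@eq_sum_in _ (fun x => phi (Node l x) i j ^ 2) (fun x => 0)); last by move=> x xin; rewrite hR'.
by rewrite !sumn_const /=; split; ring.
Qed.

Lemma repsR_step a m rl i j : uniq (a :: m :: rl) -> i \in a :: rl -> j \in a :: rl ->
  \sum_(T <- repsR a (m :: rl)) phi T i j =
    2 * (size rl).+1 * \sum_(R <- repsR a rl) phi R i j + size (repsR a rl) /\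
  \sum_(T <- repsR a (m :: rl)) (phi T i j) ^ 2 =
    (2 * (size rl).+1).+1 * \sum_(R <- repsR a rl) (phi R i j) ^ 2
    + 3 * \sum_(R <- repsR a rl) phi R i j + size (repsR a rl).
Proof.
move=> u ia ja.
have mn : m \notin a :: rl.
  by move: u => /= /andP[]; rewrite inE negb_or => /andP[am _] /andP[mrl _]; rewrite inE negb_or eq_sym am.
have im : i != m by apply/eqP => eim; move: mn; rewrite -eim ia.
have jm : j != m by apply/eqP => ejm; move: mn; rewrite -ejm ja.
have hR : forall R, R \in repsR a rl ->
    size (ins R m) = 2 * (size rl).+1 - 1 /\
    i \in leaves R /\ j \in leaves R.
  move=> R /repsR_leaves hp; split; last by rewrite !(perm_mem hp).
  have := ins_size R m; rewrite (perm_size hp) /=; lia.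
rewrite /= !big_flatten !big_map /=.
split.
- rewrite -[size (repsR a rl)]muln1 -sumn_const big_distrr -big_split /=; apply: eq_big_seq => R Rin.
  have [hs [iR jR]] := hR R Rin.
  have [h1 _] := ins_phi iR jR im jm.
  rewrite h1 hs.
  by have -> : (2 * (size rl).+1 - 1).+1 = 2 * (size rl).+1 by lia.
- rewrite -[size (repsR a rl)]muln1 -sumn_const big_distrr /= big_distrr -!big_split /=; apply: eq_big_seq => R Rin.
  have [hs [iR jR]] := hR R Rin.
  have [_ h2] := ins_phi iR jR im jm.
  rewrite h2 hs.
  have -> : (2 * (size rl).+1 - 1).+2 = (2 * (size rl).+1).+1 by lia.
  by rewrite mulnA.
Qed.

Lemma dfactSS n : dfact n.+2 = n.+2 * dfact n. Proof. by []. Qed.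

Local Open Scope ring_scope.

Lemma dfE k : (dfact (2 * k.+2 - 2))%:R = (2 * k%:R + 2) * (dfact (2 * k.+1 - 2))%:R :> rat.
Proof.
have -> : (2 * k.+2 - 2 = (2 * k.+1 - 2).+2)%N by lia.
rewrite dfactSS natrM; congr (_ * _).
have -> : ((2 * k.+1 - 2).+2 = 2 * k + 2)%N by lia.
by rewrite natrD natrM.
Qed.

Lemma dfO k : (dfact (2 * k.+2 - 3))%:R = (2 * k%:R + 1) * (dfact (2 * k.+1 - 3))%:R :> rat.
Proof.
have -> : (2 * k.+2 - 3 = 2 * k.+1 - 1)%N by lia.
rewrite dfact_odd natrM; congr (_ * _).
have -> : (2 * k.+1 - 1 = 2 * k + 1)%N by lia.
by rewrite natrD natrM.
Qed.

Lemma uniq_drop2 (a m : nat) rl : uniq (a :: m :: rl) -> uniq (a :: rl).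
Proof. by rewrite /= !inE negb_or => /andP[/andP[_ ->] /andP[_ ->]]. Qed.

Lemma depth_closed a rl : uniq (a :: rl) ->
  ((\sum_(T <- repsR a rl) phi T a a)%N%:R : rat) =
     (dfact (2 * (size rl).+1 - 2))%:R - (dfact (2 * (size rl).+1 - 3))%:R /\
  ((\sum_(T <- repsR a rl) (phi T a a) ^ 2)%N%:R : rat) =
     (4 * (size rl)%:R + 3) * (dfact (2 * (size rl).+1 - 3))%:R
     - 3 * (dfact (2 * (size rl).+1 - 2))%:R.
Proof.
elim: rl => [|m rl IH] u.
  by rewrite /= !big_cons !big_nil /=; split; rewrite ?mulr0 ?add0r; lra.
have [IH1 IH2] := IH (uniq_drop2 u).
have [s1 s2] := repsR_step u (mem_head a rl) (mem_head a rl).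
have hN : ((size (repsR a rl))%:R : rat) = (dfact (2 * (size rl).+1 - 3))%:R by rewrite repsR_size.
have hk : (((2 * (size rl).+1)%N)%:R : rat) = 2 * (size rl)%:R + 2.
  by rewrite natrM -natr1; ring.
have hk1 : (((2 * (size rl).+1).+1)%N%:R : rat) = 2 * (size rl)%:R + 3.
  by rewrite -natr1 hk; ring.
have hsz : size (m :: rl) = (size rl).+1 by [].
have e1 : ((\sum_(T <- repsR a (m :: rl)) phi T a a)%N%:R : rat) =
   (2 * (size rl)%:R + 2) * (\sum_(R <- repsR a rl) phi R a a)%N%:R + (size (repsR a rl))%:R.
  by rewrite s1 natrD natrM hk.
have e2 : ((\sum_(T <- repsR a (m :: rl)) (phi T a a) ^ 2)%N%:R : rat) =
   (2 * (size rl)%:R + 3) * (\sum_(R <- repsR a rl) (phi R a a) ^ 2)%N%:R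
   + 3 * (\sum_(R <- repsR a rl) phi R a a)%N%:R + (size (repsR a rl))%:R.
  by rewrite s2 natrD natrD natrM hk1 natrM.
rewrite e1 e2 hsz dfE dfO IH1 IH2 hN.
split; ring.
Qed.

Lemma pair_closed a b rest : uniq (a :: rest ++ [:: b]) ->
  ((\sum_(T <- repsR a (rest ++ [:: b])) phi T a b)%N%:R : rat) =
     (dfact (2 * (size (rest ++ [:: b])).+1 - 2))%:R / 2
     - (dfact (2 * (size (rest ++ [:: b])).+1 - 3))%:R /\
  ((\sum_(T <- repsR a (rest ++ [:: b])) (phi T a b) ^ 2)%N%:R : rat) =
     (4 * (size (rest ++ [:: b]))%:R + 5) / 3 * (dfact (2 * (size (rest ++ [:: b])).+1 - 3))%:R
     - 3 / 2 * (dfact (2 * (size (rest ++ [:: b])).+1 - 2))%:R.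
Proof.
elim: rest => [|m rl IH] u.
  have ab : (b == a) = false.
    by move: u; rewrite /= inE andbT => /negbTE; rewrite eq_sym.
  rewrite /= !big_cons !big_nil /= !inE (eq_sym a b) ab /=.
  change ((0*2).+2 * 1)%N with 2%N.
  rewrite andbF /=.
  split; lra.
have [IH1 IH2] := IH (uniq_drop2 u).
have ain : a \in a :: (rl ++ [:: b]) by rewrite mem_head.
have bin : b \in a :: (rl ++ [:: b]) by rewrite !(inE, mem_cat) eqxx !orbT.
have [s1 s2] := repsR_step u ain bin.
set rl' := rl ++ [:: b] in IH1 IH2 s1 s2 *.
have hN : ((size (repsR a rl'))%:R : rat) = (dfact (2 * (size rl').+1 - 3))%:R by rewrite repsR_size.
have hk : (((2 * (size rl').+1)%N)%:R : rat) = 2 * (size rl')%:R + 2.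
  by rewrite natrM -natr1; ring.
have hk1 : (((2 * (size rl').+1).+1)%N%:R : rat) = 2 * (size rl')%:R + 3.
  by rewrite -natr1 hk; ring.
have hsz : size (m :: rl') = (size rl').+1 by [].
have e1 : ((\sum_(T <- repsR a (m :: rl')) phi T a b)%N%:R : rat) =
   (2 * (size rl')%:R + 2) * (\sum_(R <- repsR a rl') phi R a b)%N%:R + (size (repsR a rl'))%:R.
  by rewrite s1 natrD natrM hk.
have e2 : ((\sum_(T <- repsR a (m :: rl')) (phi T a b) ^ 2)%N%:R : rat) =
   (2 * (size rl')%:R + 3) * (\sum_(R <- repsR a rl') (phi R a b) ^ 2)%N%:R
   + 3 * (\sum_(R <- repsR a rl') phi R a b)%N%:R + (size (repsR a rl'))%:R.
  by rewrite s2 natrD natrD natrM hk1 natrM.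
rewrite -/(m :: rl') e1 e2 hsz dfE dfO IH1 IH2 hN -natr1.
split; field.
all: by [].
Qed.

Lemma count_le1 (A : eqType) (P : pred A) (s : seq A) :
  pairwise (fun x y => ~~ (P x && P y)) s -> (count P s <= 1)%N.
Proof.
elim: s => [|x s IH] //; rewrite pairwise_cons /= => /andP[hall hp].
case Px: (P x) => /=.
  suff -> : count P s = 0%N by [].
  apply/eqP; rewrite -leqn0 leqNgt -has_count; apply/hasPn => y ys.
  by move/allP: hall => /(_ y ys); rewrite Px.
by rewrite add0n IH.
Qed.

Lemma count_iso n s T : representatives n s -> phylo n T -> count (iso T) s = 1%N.
Proof.
case=> hall hcov hpw pT.
have h1 : (0 < count (iso T) s)%N by rewrite -has_count hcov.
have h2 : (count (iso T) s <= 1)%N.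
  apply: count_le1; apply: (sub_pairwise _ hpw) => x y /= nxy.
  apply/negP => /andP[tx ty]; move: nxy; rewrite (iso_trans (iso_sym tx) ty).
  by [].
by apply/eqP; rewrite eqn_leq h2 h1.
Qed.

Lemma sum_if_const (s : seq tree) (P : pred tree) (c : rat) :
  \sum_(x <- s) (if P x then c else 0) = c *+ count P s.
Proof.
elim: s => [|x s IH]; first by rewrite big_nil.
rewrite big_cons IH /=; case: (P x) => /=; by rewrite ?add0n ?add0r ?mulrS.
Qed.

Lemma phylo_uniq n T : phylo n T -> uniq (leaves T).
Proof. by move/perm_uniq => ->; apply: iota_uniq. Qed.

Lemma sum_reps_eq n s s' (f : tree -> rat) :
  representatives n s -> representatives n s' ->
  (forall T1 T2, phylo n T1 -> phylo n T2 -> iso T1 T2 -> f T1 = f T2) ->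
  \sum_(T <- s) f T = \sum_(T <- s') f T.
Proof.
move=> rs rs' hf.
have [alls _ _] := rs; have [alls' _ _] := rs'.
transitivity (\sum_(T <- s) \sum_(T' <- s') (if iso T T' then f T' else 0)).
  apply: eq_big_seq => T Ts.
  have pT : phylo n T by move/allP: alls => /(_ T Ts).
  rewrite (eq_big_seq (fun T' => if iso T T' then f T else 0)).
    by rewrite sum_if_const (count_iso rs' pT).
  move=> T' T's; case: ifP => // iT.
  have pT' : phylo n T' by move/allP: alls' => /(_ T' T's).
  by rewrite (hf T T').
rewrite exchange_big /=; apply: eq_big_seq => T' T's.
have pT' : phylo n T' by move/allP: alls' => /(_ T' T's).
rewrite (sum_if_const s (fun T => iso T T')).
have -> : count (fun T => iso T T') s = count (iso T') s.
  by apply: eq_count => T /=; apply/idP/idP => /iso_sym.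
by rewrite (count_iso rs pT').
Qed.

Lemma reps_ok n a rl : perm_eq (a :: rl) (iota 1 n) -> representatives n (repsR a rl).
Proof.
move=> hp.
have u : uniq (a :: rl) by rewrite (perm_uniq hp) iota_uniq.
split.
- apply/allP => T /repsR_leaves hT; rewrite /phylo; exact: perm_trans hT hp.
- move=> T pT.
  have hT : perm_eq (leaves T) (a :: rl) by apply: (perm_trans pT); rewrite perm_sym.
  have [T' T'in iT] := repsR_cover hT.
  by apply/hasP; exists T'.
- exact: repsR_pairwise u.
Qed.

Lemma inner_sq (s : seq tree) (g : tree -> rat) c :
  \sum_(x <- s) (c - g x) ^+ 2 =
  (size s)%:R * c ^+ 2 + \sum_(x <- s) g x ^+ 2 - 2 * c * \sum_(x <- s) g x.
Proof.
elim: s => [|x s IH]; first by rewrite !big_nil mul0r mulr0; ring.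
rewrite !big_cons IH /= -natr1; ring.
Qed.

Lemma outer_sq (t : seq tree) (g : tree -> rat) N A B :
  \sum_(x <- t) (N * g x ^+ 2 + A - 2 * g x * B) =
  N * \sum_(x <- t) g x ^+ 2 + (size t)%:R * A - 2 * B * \sum_(x <- t) g x.
Proof.
elim: t => [|x t IH]; first by rewrite !big_nil mulr0 mul0r; ring.
rewrite !big_cons IH /= -natr1; ring.
Qed.

Lemma sum_sq_diff (s : seq tree) (g : tree -> rat) :
  \sum_(T1 <- s) \sum_(T2 <- s) (g T1 - g T2) ^+ 2 =
  2 * (size s)%:R * \sum_(T <- s) g T ^+ 2 - 2 * (\sum_(T <- s) g T) ^+ 2.
Proof.
rewrite (eq_bigr (fun T1 => (size s)%:R * g T1 ^+ 2 + \sum_(x <- s) g x ^+ 2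
                            - 2 * g T1 * \sum_(x <- s) g x)); last by move=> T1 _; rewrite inner_sq.
rewrite outer_sq; ring.
Qed.

Lemma sumr1 (s : seq tree) : \sum_(x <- s) (1 : rat) = (size s)%:R.
Proof. elim: s => [|x s IH]; first by rewrite big_nil. by rewrite big_cons IH /= -natr1 addrC. Qed.

Lemma tri n : (2 * \sum_(1 <= i < n.+1) (n - i) = n * n.-1)%N.
Proof.
elim: n => [|n IH]; first by rewrite big_nil.
rewrite big_nat_recr //= subnn addn0.
rewrite (eq_big_nat _ _ (F2 := fun i => (n - i) + 1)%N); last by move=> i /andP[h1 h2]; lia.
rewrite big_split /= sum_nat_const_nat mulnDr IH.
case: n {IH} => [|n] /=; first by [].
lia.
Qed.

Lemma sum_pairs n (F : nat -> nat -> rat) d o : (1 <= n)%N ->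
  (forall i, (1 <= i <= n)%N -> F i i = d) ->
  (forall i j, (1 <= i)%N -> (i < j)%N -> (j <= n)%N -> F i j = o) ->
  \sum_(1 <= i < n.+1) \sum_(i <= j < n.+1) F i j =
  n%:R * d + (n%:R * (n%:R - 1) / 2) * o.
Proof.
move=> n1 hd ho.
transitivity (\sum_(1 <= i < n.+1) (d + o * (n - i)%N%:R)).
  apply: eq_big_nat => i /andP[i1 iN].
  rewrite big_ltn; last exact: iN.
  rewrite hd; last by apply/andP; split; [exact: i1|lia].
  congr (_ + _).
  rewrite (eq_big_nat _ _ (F2 := fun _ => o)); last by move=> j /andP[h1 h2]; apply: ho; lia.
  by rewrite sumr_const_nat subSS mulr_natr.
rewrite big_split /= sumr_const_nat -big_distrr /= -natr_sum.
have h : (2 * (\sum_(1 <= i < n.+1) (n - i))%N%:R : rat) = n%:R * (n%:R - 1).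
  rewrite -[2]/(2%:R) -natrM tri natrM; congr (_ * _).
  by rewrite -(prednK n1) /= -natr1 addrK.
have -> : ((\sum_(1 <= i < n.+1) (n - i))%N%:R : rat) = n%:R * (n%:R - 1) / 2.
  by rewrite -h; field.
by rewrite subn1 /= mulr_natl; ring.
Qed.

Lemma phylo_inv n i j (T1 T2 : tree) : phylo n T1 -> phylo n T2 -> iso T1 T2 ->
  phi T1 i j = phi T2 i j.
Proof. by move=> p1 _ iT; apply: iso_phi => //; exact: phylo_uniq p1. Qed.

Lemma sum_reps_phi n s s0 i j : representatives n s -> representatives n s0 ->
  \sum_(T <- s) ((phi T i j)%:R : rat) = (\sum_(T <- s0) phi T i j)%N%:R /\
  \sum_(T <- s) ((phi T i j)%:R : rat) ^+ 2 = (\sum_(T <- s0) (phi T i j) ^ 2)%N%:R.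
Proof.
move=> rs rs0; split.
  rewrite natr_sum; apply: (sum_reps_eq (f := fun T => (phi T i j)%:R) rs rs0) => T1 T2 p1 p2 iT.
  by rewrite (phylo_inv i j p1 p2 iT).
rewrite natr_sum [RHS](eq_bigr (fun T => (phi T i j)%:R ^+ 2)); last by move=> T _; rewrite natrX.
apply: (sum_reps_eq (f := fun T => (phi T i j)%:R ^+ 2) rs rs0) => T1 T2 p1 p2 iT.
by rewrite (phylo_inv i j p1 p2 iT).
Qed.

Lemma diag_val n s i : (2 <= n)%N -> representatives n s -> (1 <= i <= n)%N ->
  \sum_(T <- s) ((phi T i i)%:R : rat) = (dfact (2 * n - 2))%:R - (dfact (2 * n - 3))%:R /\
  \sum_(T <- s) ((phi T i i)%:R : rat) ^+ 2 =
     (4 * n%:R - 1) * (dfact (2 * n - 3))%:R - 3 * (dfact (2 * n - 2))%:R.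
Proof.
move=> n2 rs /andP[i1 iN].
set rl := filter (predC1 i) (iota 1 n).
have hp : perm_eq (i :: rl) (iota 1 n).
  apply: uniq_perm; rewrite ?iota_uniq //.
    by rewrite /= mem_filter /= eqxx /= filter_uniq // iota_uniq.
  move=> x; rewrite inE mem_filter /= !mem_iota.
  case: eqP => [->|] /=; lia.
have [h1 h2] := sum_reps_phi i i rs (reps_ok hp).
have [c1 c2] := depth_closed (a := i) (rl := rl) ltac:(by rewrite (perm_uniq hp) iota_uniq).
have hs : (size rl).+1 = n by have := perm_size hp; rewrite size_iota.
have hs' : ((size rl)%:R : rat) = n%:R - 1 by rewrite -hs -natr1 addrK.
rewrite h1 h2 c1 c2 hs hs'; split => //; ring.
Qed.

Lemma off_val n s i j : (2 <= n)%N -> representatives n s -> (1 <= i)%N -> (i < j)%N -> (j <= n)%N ->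
  \sum_(T <- s) ((phi T i j)%:R : rat) = (dfact (2 * n - 2))%:R / 2 - (dfact (2 * n - 3))%:R /\
  \sum_(T <- s) ((phi T i j)%:R : rat) ^+ 2 =
     (4 * n%:R + 1) / 3 * (dfact (2 * n - 3))%:R - 3 / 2 * (dfact (2 * n - 2))%:R.
Proof.
move=> n2 rs i1 ij jn.
set rest := filter (fun x => (x != i) && (x != j)) (iota 1 n).
have hp : perm_eq (i :: rest ++ [:: j]) (iota 1 n).
  apply: uniq_perm; rewrite ?iota_uniq //.
    rewrite /= mem_cat mem_filter /= eqxx /= inE.
    have -> : (i == j) = false by apply/eqP; lia.
    rewrite cat_uniq filter_uniq ?iota_uniq //= andbT.
    by rewrite mem_filter eqxx andbF.
  move=> x; rewrite inE mem_cat mem_filter inE /= !mem_iota.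
  case: (eqVneq x i) => [->|xi] /=; first by lia.
  case: (eqVneq x j) => [->|xj] /=; rewrite ?orbT ?andbF ?orbF /=; lia.
have [h1 h2] := sum_reps_phi i j rs (reps_ok hp).
have [c1 c2] := pair_closed (a := i) (b := j) (rest := rest) ltac:(by rewrite (perm_uniq hp) iota_uniq).
have hs : (size (rest ++ [:: j])).+1 = n by have := perm_size hp; rewrite size_iota.
have hs' : ((size (rest ++ [:: j]))%:R : rat) = n%:R - 1 by rewrite -hs -natr1 addrK.
rewrite h1 h2 c1 c2 hs hs'; split => //; field.
all: by [].
Qed.

Lemma dsum n (s : seq tree) (F : tree -> tree -> nat -> nat -> rat) :
  \sum_(T1 <- s) \sum_(T2 <- s) \sum_(1 <= i < n.+1) \sum_(i <= j < n.+1) F T1 T2 i j =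
  \sum_(1 <= i < n.+1) \sum_(i <= j < n.+1) \sum_(T1 <- s) \sum_(T2 <- s) F T1 T2 i j.
Proof.
under eq_bigr => T1 _ do rewrite exchange_big.
under eq_bigr => T1 _ do under eq_bigr => i _ do rewrite exchange_big.
rewrite exchange_big; apply: eq_bigr => i _.
by rewrite exchange_big.
Qed.

Lemma dfact_gt0 m : (0 < dfact m)%N.
Proof.
elim/ltn_ind: m => [[|[|m]]] // IH.
by rewrite dfactSS muln_gt0 IH.
Qed.

Unset Implicit Arguments.

Theorem theorem3 (n : nat) (hn : (2 <= n)%N) :
  (exists s, representatives n s) /\
  forall s : seq tree, representatives n s ->
    let r : rat := (dfact (2 * n - 2))%:R / (dfact (2 * n - 3))%:R in
    EU_D2 n s =
      (4 * n%:R ^+ 3 + 18 * n%:R ^+ 2 - 10 * n%:R) / 3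
      - (n%:R * (n%:R + 3)) / 2 * r
      - (n%:R * (n%:R + 7)) / 4 * r ^+ 2.
Proof.
split.
  exists (repsR 1 (iota 2 n.-1)); apply: reps_ok.
  by rewrite -{2}(prednK (ltnW hn)).
move=> s rs r.
set E : rat := (dfact (2 * n - 2))%:R.
set O : rat := (dfact (2 * n - 3))%:R.
have O0 : O != 0 by rewrite /O pnatr_eq0 -lt0n dfact_gt0.
have hN : ((size s)%:R : rat) = O.
  have := sum_reps_eq (f := fun _ => (1 : rat)) rs (reps_ok (a := 1) (rl := iota 2 n.-1) _).
  rewrite !sumr1 repsR_size size_iota => -> //.
    by rewrite /O (_ : (2 * n.-1.+1 - 3 = 2 * n - 3)%N) //; rewrite prednK //; lia.
  by rewrite -{2}(prednK (ltnW hn)).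
have hsum : \sum_(T1 <- s) \sum_(T2 <- s) coph_dist2 n T1 T2 =
    n%:R * (2 * O * ((4 * n%:R - 1) * O - 3 * E) - 2 * (E - O) ^+ 2)
    + (n%:R * (n%:R - 1) / 2) *
      (2 * O * ((4 * n%:R + 1) / 3 * O - 3 / 2 * E) - 2 * (E / 2 - O) ^+ 2).
  rewrite /coph_dist2 dsum; apply: sum_pairs; first by lia.
  - move=> i hi; rewrite (sum_sq_diff s (fun T => (phi T i i)%:R)) hN.
    by have [-> ->] := diag_val hn rs hi.
  - move=> i j i1 ij jn; rewrite (sum_sq_diff s (fun T => (phi T i j)%:R)) hN.
    by have [-> ->] := off_val hn rs i1 ij jn.
rewrite /EU_D2 hsum hN /r -/E -/O.
by field.
Qed.
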